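(* Let $\psi$ be a CNF formula with only positive literals, with clauses $C_1,\dots,C_m$ each consisting of three distinct variables, and variables $x_1,\dots,x_p$, in which every variable appears in at least $3$ clauses. Let $G$ be the graph constructed as follows: (1) for each variable $x_i$ create a cycle $D_i$ whose number of vertices equals the number of clauses containing $x_i$, and, for each clause containing $x_i$, designate a distinct vertex of $D_i$ as corresponding to that clause; (2) add a vertex $a$ adjacent to every vertex of all cycles $D_1,\dots,D_p$; (3) subdivide every edge of the cycles and every edge incident to $a$ exactly twice (replacing it by a path with three edges); (4) for each clause $C_i=\{x_j,x_k,x_\ell\}$ add a triangle on new vertices $u_{ij},u_{ik},u_{i\ell}$ and make $u_{ij}$ adjacent to the vertex of $D_j$ corresponding to $C_i$, $u_{ik}$ adjacent to the vertex of $D_k$ corresponding to $C_i$, and $u_{i\ell}$ adjacent to the vertex of $D_\ell$ corresponding to $C_i$. If $G$ has a $1$-shallow topological minor of density $\frac{5m}{2m+1}$, then $\psi$ has an assignment in which every clause contains exactly one true variable.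
   Context: A graph $H$ is a $1$-shallow topological minor of $G$ if some graph obtained from $H$ by subdividing each edge at most twice is isomorphic to a subgraph of $G$. The density of $H$ is $\|H\|/|H|$ (number of edges divided by number of vertices). *)

(* Defs.v *)
From HB Require Import structures.
From mathcomp Require Import all_boot all_order all_algebra.
Set Implicit Arguments. Unset Strict Implicit. Unset Printing Implicit Defensive.
Import Order.TTheory GRing.Theory Num.Theory.

(* General graph notions.  A (finite simple) graph is given by a finite *)
(* carrier type U, a vertex predicate VU : pred U (the actual vertex    *)
(* set) and a symmetric irreflexive adjacency relation EU : rel U.       *)

Definition iso_to_subgraph (U1 U2 : finType)
  (V1 : pred U1) (E1 : rel U1) (V2 : pred U2) (E2 : rel U2) : Prop :=
  exists f : U1 -> U2,
    [/\ {in V1 &, injective f},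
        (forall x, V1 x -> V2 (f x)) &
        (forall x y, V1 x -> V1 y -> E1 x y -> E2 (f x) (f y))].

Definition is_simple_graph (n : nat) (eH : rel 'I_n) : Prop :=
  symmetric eH /\ irreflexive eH.

Definition nedges (n : nat) (eH : rel 'I_n) : nat :=
  #|[set xy : 'I_n * 'I_n | (xy.1 < xy.2)%N && eH xy.1 xy.2]|.

Definition density (n : nat) (eH : rel 'I_n) : rat :=
  ((nedges eH)%:R / n%:R)%R.

(* Subdivision of H where the edge {x,y} (x<y) is subdivided k x y times,
   k x y in {0,1,2}.  Carrier: 'I_n + ('I_n * 'I_n * 'I_2); the vertex
   inr (x,y,i) is the i-th subdivision vertex on the edge xy (from x). *)
Definition sub_carrier (n : nat) := ('I_n + ('I_n * 'I_n * 'I_2))%type.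

Definition sub_V (n : nat) (eH : rel 'I_n) (k : 'I_n -> 'I_n -> 'I_3)
  : pred (sub_carrier n) :=
  fun v => match v with
           | inl _ => true
           | inr (x, y, i) => [&& (x < y)%N, eH x y & (i < k x y)%N]
           end.

Definition sub_arc (n : nat) (eH : rel 'I_n) (k : 'I_n -> 'I_n -> 'I_3)
  (a b : sub_carrier n) : bool :=
  [exists x : 'I_n, exists y : 'I_n,
     [&& (x < y)%N, eH x y &
      [|| [&& (k x y == 0 :> nat), a == inl x & b == inl y],
          [&& (0 < k x y)%N, a == inl x & b == inr (x, y, ord0)],
          [&& (0 < k x y)%N, a == inr (x, y, inord (k x y).-1) & b == inl y] |
          [&& (k x y == 2 :> nat), a == inr (x, y, ord0) & b == inr (x, y, ord_max)]]]].

Definition sub_E (n : nat) (eH : rel 'I_n) (k : 'I_n -> 'I_n -> 'I_3)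
  : rel (sub_carrier n) :=
  fun a b => sub_arc eH k a b || sub_arc eH k b a.

Definition has_1stm_of_density (U : finType) (V : pred U) (E : rel U)
  (d : rat) : Prop :=
  exists (n : nat) (eH : rel 'I_n),
    [/\ is_simple_graph eH, density eH = d &
        exists k : 'I_n -> 'I_n -> 'I_3,
          iso_to_subgraph (sub_V eH k) (sub_E eH k) V E].

(* The CNF formula psi: m clauses, p variables; clause c consists of the *)
(* variables cl c 0, cl c 1, cl c 2 (all positive literals).              *)

Definition clause_has (m p : nat) (cl : 'I_m -> 'I_3 -> 'I_p)
  (j : 'I_p) (c : 'I_m) : bool := [exists t, cl c t == j].

(* Carrier of the constructed graph G:
   vA          : the apex a
   vD j c      : vertex of the cycle D_j corresponding to clause c
   vS j c t    : the two subdivision vertices of the cycle edge of D_j from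
                 (j,c) to (j, next (cyc j) c)   (t = 0 next to (j,c))
   vR j c t    : the two subdivision vertices of the edge a -- (j,c)
                 (t = 0 next to a)
   vU c t      : triangle vertex u_{c, cl c t}. *)
Definition G_carrier (p m : nat) :=
  (unit + ('I_p * 'I_m) + ('I_p * 'I_m * 'I_2) + ('I_p * 'I_m * 'I_2)
   + ('I_m * 'I_3))%type.

Section GVerts.
Variables p m : nat.
Definition vA : G_carrier p m := inl (inl (inl (inl tt))).
Definition vD (j : 'I_p) (c : 'I_m) : G_carrier p m := inl (inl (inl (inr (j, c)))).
Definition vS (j : 'I_p) (c : 'I_m) (t : 'I_2) : G_carrier p m := inl (inl (inr (j, c, t))).
Definition vR (j : 'I_p) (c : 'I_m) (t : 'I_2) : G_carrier p m := inl (inr (j, c, t)).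
Definition vU (c : 'I_m) (t : 'I_3) : G_carrier p m := inr (c, t).
End GVerts.

Definition G_V (p m : nat) (cl : 'I_m -> 'I_3 -> 'I_p) : pred (G_carrier p m) :=
  fun v => match v with
           | inl (inl (inl (inl _))) => true
           | inl (inl (inl (inr (j, c)))) => clause_has cl j c
           | inl (inl (inr (j, c, _))) => clause_has cl j c
           | inl (inr (j, c, _)) => clause_has cl j c
           | inr _ => true
           end.

(* cyc j : the cyclic order of the cycle D_j (its vertices = the clauses
   containing x_j); the cycle edges are {c, next (cyc j) c}. *)
Definition G_arc (p m : nat) (cl : 'I_m -> 'I_3 -> 'I_p)
  (cyc : 'I_p -> seq 'I_m) (x y : G_carrier p m) : bool :=
  [|| [exists j : 'I_p, exists c : 'I_m,
        clause_has cl j c &&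
        [|| (x == vD j c) && (y == vS j c ord0),
            (x == vS j c ord0) && (y == vS j c ord_max),
            (x == vS j c ord_max) && (y == vD j (next (cyc j) c)),
            (x == vA p m) && (y == vR j c ord0),
            (x == vR j c ord0) && (y == vR j c ord_max) |
            (x == vR j c ord_max) && (y == vD j c)]],
      [exists c : 'I_m, exists t : 'I_3, exists t' : 'I_3,
        [&& t != t', x == vU p c t & y == vU p c t']] |
      [exists c : 'I_m, exists t : 'I_3,
        (x == vU p c t) && (y == vD (cl c t) c)]].

Definition G_E (p m : nat) (cl : 'I_m -> 'I_3 -> 'I_p)
  (cyc : 'I_p -> seq 'I_m) : rel (G_carrier p m) :=
  fun x y => G_arc cl cyc x y || G_arc cl cyc y x.

(* Main.v *)
Require Import Defs.
From HB Require Import structures.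
From mathcomp Require Import all_boot all_order all_algebra.
From mathcomp Require Import zify.
Set Implicit Arguments. Unset Strict Implicit. Unset Printing Implicit Defensive.

Section Sub.
Variables (n : nat) (eH : rel 'I_n) (k : 'I_n -> 'I_n -> 'I_3).
Hypothesis eHs : symmetric eH.
Hypothesis eHi : irreflexive eH.
Local Notation S := (sub_carrier n).
Local Notation VS := (sub_V eH k).
Local Notation ES := (sub_E eH k).

Inductive sarc : S -> S -> Prop :=
| sa0 (x y : 'I_n) : x < y -> eH x y -> (k x y : nat) = 0 -> sarc (inl x) (inl y)
| sa1 (x y : 'I_n) : x < y -> eH x y -> 0 < k x y -> sarc (inl x) (inr (x, y, ord0))
| sa2 (x y : 'I_n) : x < y -> eH x y -> 0 < k x y -> sarc (inr (x, y, inord (k x y).-1)) (inl y)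
| sa3 (x y : 'I_n) : x < y -> eH x y -> (k x y : nat) = 2 ->
    sarc (inr (x, y, ord0)) (inr (x, y, ord_max)).

Lemma sarcP a b : sub_arc eH k a b -> sarc a b.
Proof.
case/existsP=> x /existsP[y /andP[xy /andP[exy h]]].
case/orP: h => [/and3P[/eqP h0 /eqP -> /eqP ->]|]; first exact: sa0.
case/orP => [/and3P[h0 /eqP -> /eqP ->]|]; first exact: sa1.
case/orP => [/and3P[h0 /eqP -> /eqP ->]|]; first exact: sa2.
by case/and3P=> [/eqP h0 /eqP -> /eqP ->]; apply: sa3.
Qed.

Lemma sarcE a b : sarc a b -> sub_arc eH k a b.
Proof.
case=> x y xy exy h; apply/existsP; exists x; apply/existsP; exists y;
  rewrite xy exy /= ?h ?eqxx ?orbT //.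
Qed.

Definition lft (x y : 'I_n) (i : 'I_2) : S :=
  if (i : nat) == 0 then inl x else inr (x, y, ord0).
Definition rgt (x y : 'I_n) (i : 'I_2) : S :=
  if (i : nat) == (k x y).-1 then inl y else inr (x, y, ord_max).

Lemma kle (x y : 'I_n) : (k x y : nat) <= 2.
Proof. by have := ltn_ord (k x y). Qed.

Lemma inordk (x y : 'I_n) : ((inord (k x y).-1 : 'I_2) : nat) = (k x y).-1.
Proof. by rewrite inordK //; have := kle x y; case: (k x y : nat) => [|[|[|]]]. Qed.

Lemma nbr_inr (x y : 'I_n) (i : 'I_2) w : i < k x y -> ES (inr (x, y, i)) w -> w = lft x y i \/ w = rgt x y i.
Proof.
move=> ik; case/orP=> /sarcP h; inversion h; subst.
- by right; rewrite /rgt inordk eqxx.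
- right; rewrite /rgt; match goal with H : nat_of_ord (k x y) = 2 |- _ => by rewrite H end.
- by left.
- by left.
Qed.

Lemma ord2 (i : 'I_2) : i = ord0 \/ i = ord_max.
Proof. by case: i => [[|[|]]] //= ?; [left|right]; apply/val_inj. Qed.

Lemma nbr_inr_ok (x y : 'I_n) (i : 'I_2) : x < y -> eH x y -> i < k x y ->
  [/\ ES (inr (x, y, i)) (lft x y i), ES (inr (x, y, i)) (rgt x y i),
      VS (lft x y i), VS (rgt x y i) & lft x y i != rgt x y i].
Proof.
move=> xy exy ik; have k2 := kle x y.
case: (ord2 i) ik => -> /= ik.
- have e1 : sarc (inl x) (inr (x, y, ord0)) by apply: sa1; lia.
  rewrite /lft /rgt /=.
  case: eqP => hk.
  + have e2 : sarc (inr (x, y, ord0)) (inl y).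
      have -> : (ord0 : 'I_2) = inord (k x y).-1 by apply/val_inj; rewrite /= inordk -hk.
      by apply: sa2; lia.
    split; rewrite /sub_E ?(sarcE e1) ?(sarcE e2) ?orbT //=.
    by apply/eqP=> -[] e; move: xy; rewrite e ltnn.
  + have hk2 : (k x y : nat) = 2 by lia.
    have e2 := sa3 xy exy hk2.
    split; rewrite /sub_E ?(sarcE e1) ?(sarcE e2) ?orbT //=.
    by rewrite xy exy hk2.
- have hk2 : (k x y : nat) = 2 by lia.
  rewrite /lft /rgt /= hk2 /=.
  have e1 := sa3 xy exy hk2.
  have e2 : sarc (inr (x, y, ord_max)) (inl y).
    have -> : (ord_max : 'I_2) = inord (k x y).-1 by apply/val_inj; rewrite /= inordk hk2.
    by apply: sa2; lia.
  split; rewrite /sub_E ?(sarcE e1) ?(sarcE e2) ?orbT //=.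
  by rewrite xy exy.
Qed.

Definition isinr (s : S) := if s is inr _ then true else false.

Lemma sES_sym a b : ES a b -> ES b a.
Proof. by rewrite /sub_E orbC. Qed.

Lemma deg_inr s : VS s -> isinr s -> #|[set w | VS w && ES s w]| = 2.
Proof.
case: s => // -[[x y] i] /= /and3P[xy exy ik] _.
have [e1 e2 v1 v2 ne] := nbr_inr_ok xy exy ik.
have c2 : #|[set lft x y i; rgt x y i]| = 2 by rewrite cards2 ne.
apply: eq_trans c2.
apply: eq_card => w; rewrite !inE.
apply/idP/idP.
- by case/andP=> _ /(nbr_inr ik) [->|->]; rewrite eqxx ?orbT.
- by case/orP=> /eqP->; rewrite ?v1 ?v2 ?e1 ?e2.
Qed.

Lemma path_inr s1 s2 s3 : VS s2 -> isinr s1 -> isinr s2 -> isinr s3 ->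
  ES s1 s2 -> ES s2 s3 -> s1 = s3.
Proof.
case: s2 => // -[[x y] i] /= /and3P[xy exy ik] i1 _ i3 /sES_sym h1 h3.
have k2 := kle x y.
case: (nbr_inr ik h1) => e1; case: (nbr_inr ik h3) => e3; rewrite ?e1 ?e3 //;
  subst; move: i1 i3; rewrite /lft /rgt;
  case: eqP => h0; case: eqP => h1' //= _ _; lia.
Qed.

Definition nb (x y : 'I_n) : S :=
  if x < y then (if (k x y : nat) == 0 then inl y else inr (x, y, ord0))
  else (if (k y x : nat) == 0 then inl y else inr (y, x, inord (k y x).-1)).

Lemma nb_ok x y : eH x y -> VS (nb x y) && ES (inl x) (nb x y).
Proof.
move=> exy; rewrite /nb; case: ltnP => xy.
- case: eqP => h0 /=.
    by rewrite /sub_E (sarcE (sa0 xy exy h0)).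
  have h1 : 0 < k x y by lia.
  by rewrite xy exy h1 /sub_E (sarcE (sa1 xy exy h1)).
- have yx : y < x.
    rewrite ltn_neqAle xy andbT; apply/negP=> /eqP e.
    have e' : y = x by apply/val_inj.
    by move: exy; rewrite e' eHi.
  have eyx : eH y x by rewrite eHs.
  case: eqP => h0 /=.
    by rewrite /sub_E (sarcE (sa0 yx eyx h0)) orbT.
  have h1 : 0 < k y x by lia.
  rewrite yx eyx inordk /sub_E (sarcE (sa2 yx eyx h1)) orbT andbT.
  by have := kle y x; lia.
Qed.

Lemma nb_inj x : {in [set y | eH x y] &, injective (nb x)}.
Proof.
move=> y y' _ _; rewrite /nb.
case: ltnP => h1; case: ltnP => h2;
  case: eqP => _; case: eqP => _; move=> e; inversion e; subst => //;
  try (by apply/val_inj); lia.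
Qed.

Lemma degH x : #|[set y | eH x y]| <= #|[set w | VS w && ES (inl x) w]|.
Proof.
rewrite -(card_in_imset (@nb_inj x)); apply: subset_leq_card; apply/subsetP=> w.
by case/imsetP=> y; rewrite inE => /nb_ok h ->; rewrite inE.
Qed.

Lemma card_pairG (I J : finType) (P : pred (I * J)) :
  #|[set x | P x]| = \sum_(i : I) #|[set j | P (i, j)]|.
Proof.
rewrite -sum1_card.
under [RHS]eq_bigr => c _ do rewrite -sum1_card.
rewrite pair_big_dep /=; apply: eq_bigl => -[c t]; by rewrite !inE.
Qed.

Lemma sumdeg : \sum_(x : 'I_n) #|[set y | eH x y]| = 2 * nedges eH.
Proof.
rewrite -(card_pairG (fun xy : 'I_n * 'I_n => eH xy.1 xy.2)) /nedges.
pose A := [set xy : 'I_n * 'I_n | (xy.1 < xy.2) && eH xy.1 xy.2].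
pose sw := fun xy : 'I_n * 'I_n => (xy.2, xy.1).
have swi : injective sw by move=> [a b] [c d] /= [] -> ->.
have -> : [set xy : 'I_n * 'I_n | eH xy.1 xy.2] = A :|: sw @: A.
  apply/setP=> -[a b]; rewrite !inE /=.
  apply/idP/idP.
  - move=> e; case: (ltngtP a b) => h.
    + by rewrite e.
    + apply/orP; right; apply/imsetP; exists (b, a) => //.
      by rewrite inE /= h eHs.
    + have e' : a = b by apply/val_inj.
      by move: e; rewrite e' eHi.
  - case/orP=> [/andP[_ ->] //|/imsetP[[c d]]]; rewrite inE /= => /andP[_ e] [-> ->].
    by rewrite eHs.
rewrite cardsU card_imset // -/A.
have -> : A :&: sw @: A = set0.
  apply/setP=> -[a b]; rewrite !inE /=.
  apply/negP=> /andP[/andP[h _] /imsetP[[c d]]]; rewrite inE /= => /andP[h' _] [e1 e2].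
  by subst; lia.
by rewrite cards0 subn0 addnn mul2n.
Qed.
End Sub.


Section GS.
Variables (p m : nat) (cl : 'I_m -> 'I_3 -> 'I_p) (cyc : 'I_p -> seq 'I_m).
Local Notation G := (G_carrier p m).

Inductive gadj : G -> G -> Prop :=
| aDS0 j c : clause_has cl j c -> gadj (vD j c) (vS j c ord0)
| aS01 j c : clause_has cl j c -> gadj (vS j c ord0) (vS j c ord_max)
| aS1D j c : clause_has cl j c -> gadj (vS j c ord_max) (vD j (next (cyc j) c))
| aAR j c : clause_has cl j c -> gadj (vA p m) (vR j c ord0)
| aR01 j c : clause_has cl j c -> gadj (vR j c ord0) (vR j c ord_max)
| aR1D j c : clause_has cl j c -> gadj (vR j c ord_max) (vD j c)
| aUU c t t' : t != t' -> gadj (vU p c t) (vU p c t')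
| aUD c t : gadj (vU p c t) (vD (cl c t) c).

Lemma G_arc_adj x y : G_arc cl cyc x y -> gadj x y.
Proof.
case/or3P.
- case/existsP=> j /existsP[c /andP[hc]].
  by do ![case/orP=> [/andP[/eqP-> /eqP->]|]; first by constructor]; case/andP=> /eqP-> /eqP->; constructor.
- by case/existsP=> c /existsP[t /existsP[t' /and3P[ht /eqP-> /eqP->]]]; constructor.
- by case/existsP=> c /existsP[t /andP[/eqP-> /eqP->]]; constructor.
Qed.

Lemma G_E_adj x y : G_E cl cyc x y -> gadj x y \/ gadj y x.
Proof. by case/orP=> /G_arc_adj; auto. Qed.
Hypothesis cl_distinct : forall c : 'I_m, injective (cl c).
Hypothesis cyc_uniq : forall j : 'I_p, uniq (cyc j).
Hypothesis cyc_mem : forall (j : 'I_p) (c : 'I_m), (c \in cyc j) = clause_has cl j c.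
Local Notation GE := (G_E cl cyc).

Lemma nbA w : GE (vA p m) w -> exists j c, w = vR j c ord0.
Proof. by case/G_E_adj=> h; inversion h; eauto. Qed.
Lemma nbR0 j c w : GE (vR j c ord0) w -> w = vA p m \/ w = vR j c ord_max.
Proof. by case/G_E_adj=> h; inversion h; subst; auto. Qed.
Lemma nbR1 j c w : GE (vR j c ord_max) w -> w = vR j c ord0 \/ w = vD j c.
Proof. by case/G_E_adj=> h; inversion h; subst; auto. Qed.
Lemma nbS0 j c w : GE (vS j c ord0) w -> w = vD j c \/ w = vS j c ord_max.
Proof. by case/G_E_adj=> h; inversion h; subst; auto. Qed.
Lemma nbS1 j c w : GE (vS j c ord_max) w -> w = vS j c ord0 \/ w = vD j (next (cyc j) c).
Proof. by case/G_E_adj=> h; inversion h; subst; auto. Qed.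

Definition tj (j : 'I_p) (c : 'I_m) : 'I_3 := odflt ord0 [pick t | cl c t == j].

Lemma tjE c t : tj (cl c t) c = t.
Proof.
rewrite /tj; case: pickP => [t' /eqP /cl_distinct -> //|/(_ t)]; by rewrite eqxx.
Qed.

Definition Dlist j c : seq G :=
  [:: vS j c ord0; vS j (prev (cyc j) c) ord_max; vR j c ord_max; vU p c (tj j c)].

Lemma nbD j c w : GE (vD j c) w -> w \in Dlist j c.
Proof.
rewrite /Dlist !inE; case/G_E_adj=> h; inversion h; subst;
  rewrite ?tjE ?prev_next ?cyc_uniq // ?eqxx ?orbT //.
Qed.

Lemma nbU c t w : GE (vU p c t) w ->
  w = vD (cl c t) c \/ exists2 t', t' != t & w = vU p c t'.
Proof.
case/G_E_adj=> h; inversion h; subst; auto; right.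
- by exists t'; rewrite // eq_sym.
- by exists t0.
Qed.

Variables (B T : {set G}) (ES : rel G).
Hypothesis ES_sym : forall v w, ES v w -> ES w v.
Hypothesis ES_GE : forall v w, ES v w -> GE v w.
Hypothesis ES_W : forall v w, ES v w -> (v \in B) || (v \in T).
Hypothesis BT : forall v, v \in B -> v \in T -> False.
Hypothesis T_deg : forall v, v \in T -> #|[set w | ES v w]| = 2.
Hypothesis T_path : forall u v w, u \in T -> v \in T -> w \in T ->
  ES u v -> ES v w -> u = w.

Definition dG v := #|[set w | ES v w]|.

Lemma W_r v w : ES v w -> w \notin B -> w \in T.
Proof.
move=> h nB; case/orP: (ES_W (ES_sym h)) => // hB; by rewrite hB in nB.
Qed.

Lemma dG_le v (N : {set G}) : (forall w, ES v w -> w \in N) -> dG v <= #|N|.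
Proof. by move=> h; apply: subset_leq_card; apply/subsetP=> w; rewrite inE; exact: h. Qed.

Lemma T_both v x y : v \in T -> (forall w, ES v w -> w = x \/ w = y) -> ES v x /\ ES v y.
Proof.
move=> vT h; have d2 := T_deg vT.
split; apply/negPn/negP=> nx.
- have : dG v <= #|[set y]|.
    apply: dG_le => w e; case: (h w e) => ew; last by rewrite ew inE.
    by subst; rewrite e in nx.
  by rewrite /dG d2 cards1.
- have : dG v <= #|[set x]|.
    apply: dG_le => w e; case: (h w e) => ew; first by rewrite ew inE.
    by subst; rewrite e in nx.
  by rewrite /dG d2 cards1.
Qed.

Lemma T_three v x y z : v \in T -> ES v x -> ES v y -> ES v z ->
  x != y -> x != z -> y != z -> False.
Proof.
move=> vT ex ey ez nxy nxz nyz.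
have : #|[set x; y; z]| <= dG v.
  apply: subset_leq_card; apply/subsetP=> w; rewrite !inE.
  by move=> h; do ?case/orP: h => h; move/eqP: h => ->.
rewrite /dG T_deg // -setUA cardsU1 cards2 !inE negb_or nxy nxz nyz.
by [].
Qed.

Lemma dG2 v x y : (forall w, ES v w -> w = x \/ w = y) -> dG v <= 2.
Proof.
move=> h; apply: leq_trans (dG_le (N:=[set x; y]) _) _.
  by move=> w /h [->|->]; rewrite !inE eqxx ?orbT.
by rewrite cards2; case: (_ != _).
Qed.

Lemma dU c t : dG (vU p c t) <= 3.
Proof.
apply: leq_trans (dG_le (N := vD (cl c t) c |: [set vU p c t' | t' in [set~ t]]) _) _.
  move=> w /ES_GE /nbU [->|[t' ht' ->]]; rewrite !inE ?eqxx //.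
  by apply/orP; right; apply/imsetP; exists t'; rewrite // !inE.
rewrite cardsU1 -[3]/(1+2); apply: leq_add; first by case: (_ \notin _).
by apply: leq_trans (leq_imset_card _ _) _; rewrite cardsC1 card_ord.
Qed.

Lemma dD j c : dG (vD j c) <= 4.
Proof.
apply: leq_trans (dG_le (N := [set w in Dlist j c]) _) _.
  by move=> w /ES_GE /nbD h; rewrite inE.
by rewrite cardsE; apply: card_size.
Qed.

Lemma Dfull j c : 4 <= dG (vD j c) -> forall w, w \in Dlist j c -> ES (vD j c) w.
Proof.
move=> h4 w wD.
have sub : [set w | ES (vD j c) w] \subset Dlist j c.
  by apply/subsetP=> x; rewrite inE => /ES_GE /nbD.
have ceq : #|[set w | ES (vD j c) w]| = #|Dlist j c|.
  apply/eqP; rewrite eqn_leq subset_leq_card //=.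
  by apply: leq_trans (card_size _) _; exact: h4.
by move: (subset_cardP ceq sub w); rewrite wD inE.
Qed.

Definition isR (v : G) := if v is inl (inr _) then true else false.
Definition isU (v : G) := if v is inr _ then true else false.
Definition fullv (v : G) :=
  if v is inl (inl (inl (inr _))) then 4 <= dG v else false.
Definition epsv (v : G) := isR v ||
  (if v is inl (inl (inl (inr (j, c)))) then ES (vR j c ord_max) v else false).

Lemma I2 (t : 'I_2) : t = ord0 \/ t = ord_max.
Proof. by case: t => [[|[|]]] //= ?; [left|right]; apply/val_inj. Qed.

Lemma dS j c t : dG (vS j c t) <= 2.
Proof.
by case: (I2 t) => ->; [apply: (dG2 (x := vD j c) (y := vS j c ord_max))
  | apply: (dG2 (x := vS j c ord0) (y := vD j (next (cyc j) c)))];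
  move=> w /ES_GE; [apply: nbS0 | apply: nbS1].
Qed.

Lemma dR j c t : dG (vR j c t) <= 2.
Proof.
by case: (I2 t) => ->; [apply: (dG2 (x := vA p m) (y := vR j c ord_max))
  | apply: (dG2 (x := vR j c ord0) (y := vD j c))];
  move=> w /ES_GE; [apply: nbR0 | apply: nbR1].
Qed.

Lemma bound1 v : v != vA p m -> dG v + epsv v + isU v <= 4 + fullv v.
Proof.
case: v => [[[[[]|[j c]]|[[j c] t]]|[[j c] t]]|[c t]] //= _.
- have := dD j c; rewrite /vD /epsv /= => h2; case: leqP => h1; case: (ES _ _) => /=; lia.
- have := dS j c t; rewrite /vS /=; lia.
- have := dR j c t; rewrite /vR /=; lia.
- have := dU c t; rewrite /vU /=; lia.
Qed.

Lemma bound0 v : v != vA p m -> dG v + isR v <= 3 + fullv v.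
Proof.
case: v => [[[[[]|[j c]]|[[j c] t]]|[[j c] t]]|[c t]] //= _.
- have := dD j c; rewrite /vD /= => h2; case: leqP => h1; lia.
- have := dS j c t; rewrite /vS /=; lia.
- have := dR j c t; rewrite /vR /=; lia.
- have := dU c t; rewrite /vU /=; lia.
Qed.

Definition cidx (v : G) : option ('I_p * 'I_m) :=
  match v with
  | inl (inl (inl (inr jc))) => Some jc
  | inl (inr (j, c, _)) => Some (j, c)
  | _ => None
  end.

Definition gch (x : 'I_p * 'I_m) : G :=
  if vR x.1 x.2 ord0 \in B then vR x.1 x.2 ord0
  else if vR x.1 x.2 ord_max \in B then vR x.1 x.2 ord_max else vD x.1 x.2.

Lemma gch_inj : injective gch.
Proof.
apply: (@pcan_inj _ _ _ cidx) => [[j c]]; rewrite /gch /=.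
by case: ifP => _ //; case: ifP.
Qed.

Lemma gch_ok x : ES (vA p m) (vR x.1 x.2 ord0) -> (gch x \in B) && epsv (gch x).
Proof.
case: x => j c /= e0; rewrite /gch /=.
case: ifP => R0B; first by rewrite R0B.
have R0T : vR j c ord0 \in T by move: (W_r e0); rewrite R0B; exact: (fun h => h isT).
have [_ e1] := T_both R0T (fun w h => nbR0 (ES_GE h)).
case: ifP => R1B; first by rewrite R1B.
have R1T : vR j c ord_max \in T by move: (W_r e1); rewrite R1B; exact: (fun h => h isT).
have [_ e2] := T_both R1T (fun w h => nbR1 (ES_GE h)).
case DB: (vD j c \in B); first by rewrite /epsv /= e2.
have DT : vD j c \in T by move: (W_r e2); rewrite DB; exact: (fun h => h isT).
by have := T_path R0T R1T DT e1 e2.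
Qed.

Lemma card_sum_bool (A : {set G}) (P : pred G) :
  #|[set v in A | P v]| = \sum_(v in A) P v.
Proof.
rewrite -sum1_card big_mkcond [RHS]big_mkcond /=.
apply: eq_bigr => v _; rewrite inE; by case: (v \in A); case: (P v).
Qed.

Lemma dA_bound : vA p m \in B -> dG (vA p m) <= \sum_(v in B :\ vA p m) epsv v.
Proof.
move=> aB.
pose X := [set x : 'I_p * 'I_m | ES (vA p m) (vR x.1 x.2 ord0)].
apply: leq_trans (dG_le (N := [set vR x.1 x.2 ord0 | x in X]) _) _.
  move=> w e; have [j [c ew]] := nbA (ES_GE e); subst w.
  by apply/imsetP; exists (j, c); rewrite // inE.
apply: leq_trans (leq_imset_card _ _) _.
rewrite -(card_imset _ gch_inj) -card_sum_bool.
apply: subset_leq_card; apply/subsetP=> v /imsetP[x]; rewrite inE => /gch_ok.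
case/andP=> h1 h2 ->; rewrite !inE h1 h2 !andbT.
by apply/eqP=> h; move: h2; rewrite h.
Qed.

Lemma sum_set_const (A : {set G}) c : \sum_(v in A) c = #|A| * c.
Proof. exact: sum_nat_const. Qed.

Lemma keyA : vA p m \in B ->
  \sum_(v in B) dG v + \sum_(v in B :\ vA p m) isU v <=
  4 * #|B :\ vA p m| + \sum_(v in B :\ vA p m) fullv v.
Proof.
move=> aB.
have e : \sum_(v in B) dG v = dG (vA p m) + \sum_(v in B :\ vA p m) dG v.
  exact: big_setD1.
rewrite e.
have h1 := dA_bound aB.
have h2 : \sum_(v in B :\ vA p m) (dG v + epsv v + isU v) <=
          \sum_(v in B :\ vA p m) (4 + fullv v).
  by apply: leq_sum => v; rewrite !inE => /andP[hv _]; apply: bound1.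
move: h2; rewrite !big_split /= sum_set_const => h2.
apply: leq_trans (leq_trans h2 _); last by rewrite mulnC.
by rewrite leq_add2r addnC leq_add2l.
Qed.

Lemma card_pair (P : pred ('I_m * 'I_3)) :
  #|[set x | P x]| = \sum_(c < m) #|[set t | P (c, t)]|.
Proof.
rewrite -sum1_card.
under [RHS]eq_bigr => c _ do rewrite -sum1_card.
rewrite pair_big_dep /=; apply: eq_bigl => -[c t]; by rewrite !inE.
Qed.

Definition FD c t := (vD (cl c t) c \in B) && (4 <= dG (vD (cl c t) c)).

Lemma GE_sym v w : GE v w -> GE w v.
Proof. by rewrite /G_E orbC. Qed.

Lemma fullD_clause j c : 4 <= dG (vD j c) -> exists t, j = cl c t.
Proof.
move=> h; have e := Dfull h (w := vU p c (tj j c)).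
have /ES_GE /GE_sym /nbU [] : ES (vD j c) (vU p c (tj j c)).
  by apply: e; rewrite !inE eqxx !orbT.
- by case=> ->; eauto.
- by case=> t' _.
Qed.

Lemma sumF : \sum_(v in B :\ vA p m) fullv v = \sum_(c < m) #|[set t | FD c t]|.
Proof.
rewrite -card_sum_bool -(card_pair (fun x => FD x.1 x.2)).
have inj : injective (fun x : 'I_m * 'I_3 => vD (cl x.1 x.2) x.1 : G).
  move=> [c t] [c' t'] /= [] e1 e2; subst c'.
  by rewrite (cl_distinct e1).
rewrite -(card_imset _ inj); apply: eq_card => v; rewrite !inE.
apply/idP/imsetP.
- move=> /andP[/andP[h0 vB] hf].
  case: v h0 vB hf => [[[[[]|[j c]]|x]|x]|x] //=;
  move=> _ vB hf.
  have [t ej] := fullD_clause hf; subst j.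
  by exists (c, t); rewrite // inE /FD /= vB.
- case=> -[c t]; rewrite inE /FD /= => /andP[vB hf] ->.
  by rewrite vB andbT /=; exact: hf.
Qed.

Lemma sumU : \sum_(v in B :\ vA p m) isU v = \sum_(c < m) #|[set t | vU p c t \in B]|.
Proof.
rewrite -card_sum_bool -(card_pair (fun x => vU p x.1 x.2 \in B)).
have inj : injective (fun x : 'I_m * 'I_3 => vU p x.1 x.2).
  by move=> [c t] [c' t'] /= [] -> ->.
rewrite -(card_imset _ inj); apply: eq_card => v; rewrite !inE.
apply/idP/imsetP.
- move=> /andP[/andP[h0 vB] hf].
  case: v h0 vB hf => [x|[c t]] //= _ vB _.
  by exists (c, t); rewrite // inE.
- by case=> -[c t]; rewrite inE /= => vB ->; rewrite vB.
Qed.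

Definition o0 : 'I_3 := @Ordinal 3 0 isT.
Definition o1 : 'I_3 := @Ordinal 3 1 isT.
Definition o2 : 'I_3 := @Ordinal 3 2 isT.
Lemma I3 (t : 'I_3) : [\/ t = o0, t = o1 | t = o2].
Proof.
case: t => [[|[|[|]]] h] //.
- by apply: Or31; apply/val_inj.
- by apply: Or32; apply/val_inj.
- by apply: Or33; apply/val_inj.
Qed.

Lemma tri_contra (R : 'I_3 -> 'I_3 -> Prop) :
  (forall t t', R t t' -> R t' t) ->
  (forall t, exists2 t', t' != t & R t t') ->
  (forall t t1 t2, t1 != t -> t2 != t -> t1 != t2 -> R t t1 -> R t t2 -> False) ->
  False.
Proof.
move=> Rs Hex Hno.
have [t1 n1 r1] := Hex o0.
case: (I3 t1) n1 r1 => -> // _ r1.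
- have [t3 n3 r3] := Hex o2.
  case: (I3 t3) n3 r3 => -> // _ r3.
  + by apply: (Hno o0 o1 o2) => //; apply: Rs.
  + by apply: (Hno o1 o0 o2) => //; apply: Rs.
- have [t3 n3 r3] := Hex o1.
  case: (I3 t3) n3 r3 => -> // _ r3.
  + by apply: (Hno o0 o2 o1) => //; apply: Rs.
  + by apply: (Hno o2 o0 o1) => //; apply: Rs.
Qed.

Lemma clause_bound c : #|[set t | FD c t]| <= 2 + #|[set t | vU p c t \in B]|.
Proof.
case: (posnP #|[set t | vU p c t \in B]|) => [U0|Upos]; last first.
  apply: leq_trans (max_card _) _; rewrite card_ord; lia.
rewrite U0 addn0 leqNgt; apply/negP => h3.
have allF : forall t, FD c t.
  move=> t; have : [set t | FD c t] = setT.
    by apply/eqP; rewrite eqEcard subsetT cardsT card_ord.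
  by move/setP/(_ t); rewrite !inE.
have noU : forall t, vU p c t \notin B.
  move=> t; apply/negP=> h; move/eqP: U0; rewrite cards_eq0 => /eqP/setP/(_ t).
  by rewrite !inE h.
have eDU : forall t, ES (vD (cl c t) c) (vU p c t).
  move=> t; have /andP[_ hf] := allF t.
  by apply: (Dfull hf); rewrite /Dlist tjE !inE eqxx !orbT.
have UT : forall t, vU p c t \in T.
  by move=> t; apply: (W_r (eDU t)); exact: noU.
apply: (tri_contra (R := fun t t' => ES (vU p c t) (vU p c t'))).
- by move=> t t'; apply: ES_sym.
- move=> t; case: (boolP [exists t', (t' != t) && ES (vU p c t) (vU p c t')]).
    by case/existsP=> t' /andP[h1 h2]; exists t'.
  rewrite negb_exists => /forallP hn; exfalso.
  have : dG (vU p c t) <= #|[set vD (cl c t) c]|.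
    apply: dG_le => w e; case: (nbU (ES_GE e)) => [->|[t' ht' ew]]; first by rewrite inE.
    by subst w; move: (hn t'); rewrite ht' e.
  by rewrite /dG T_deg // cards1.
- move=> t t1 t2 n1 n2 n12 r1 r2.
  apply: (T_three (UT t) (ES_sym (eDU t)) r1 r2) => //.
  by apply/eqP=> -[] e; rewrite e eqxx in n12.
Qed.

Definition hR (v : G) : G :=
  if v is inl (inl (inl (inr (j, c)))) then
    (if vR j c ord_max \in B then vR j c ord_max else vR j c ord0)
  else v.

Lemma hR_ok v : vA p m \notin B -> v \in B -> fullv v -> (hR v \in B) && isR (hR v).
Proof.
move=> aB vB.
case: v vB => [[[[[]|[j c]]|x]|x]|x] //= vB hf.
have e1 : ES (vD j c) (vR j c ord_max).
  by apply: (Dfull hf); rewrite !inE eqxx !orbT.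
case: ifP => R1B; first by rewrite R1B.
have R1T : vR j c ord_max \in T by move: (W_r e1); rewrite R1B; exact: (fun h => h isT).
have [e2 _] := T_both R1T (fun w h => nbR1 (ES_GE h)).
case R0B : (vR j c ord0 \in B) => //.
have R0T : vR j c ord0 \in T by move: (W_r e2); rewrite R0B; exact: (fun h => h isT).
have [e3 _] := T_both R0T (fun w h => nbR0 (ES_GE h)).
have AT : vA p m \in T by move: (W_r e3); rewrite (negbTE aB); exact: (fun h => h isT).
by have := T_path R1T R0T AT e2 e3.
Qed.

Lemma keyNA : vA p m \notin B -> \sum_(v in B) dG v <= 3 * #|B|.
Proof.
move=> aB.
have h : \sum_(v in B) (dG v + isR v) <= \sum_(v in B) (3 + fullv v).
  apply: leq_sum => v vB; apply: bound0.
  by apply/eqP=> e; move: aB; rewrite -e vB.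
have hF : \sum_(v in B) fullv v <= \sum_(v in B) isR v.
  rewrite -!card_sum_bool.
  have inj : {in [set v in B | fullv v] &, injective hR}.
    move=> v w; rewrite !inE => /andP[_ fv] /andP[_ fw].
    case: v fv => [[[[[]|[j c]]|x]|x]|x] //= _;
    case: w fw => [[[[[]|[j' c']]|x]|x]|x] //= _;
    by do 2 case: ifP => _ //; move=> -[] -> ->.
  rewrite -(card_in_imset inj); apply: subset_leq_card; apply/subsetP=> w.
  case/imsetP=> v; rewrite inE => /andP[vB fv] ->.
  by have /andP[h1 h2] := hR_ok aB vB fv; rewrite inE h1 h2.
move: h; rewrite !big_split /= sum_set_const => h.
have : \sum_(v in B) dG v + \sum_(v in B) isR v <= 3 * #|B| + \sum_(v in B) isR v.
  apply: leq_trans h _; rewrite mulnC leq_add2l; exact: hF.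
by rewrite leq_add2r.
Qed.

Lemma sum_eq_le (I : finType) (E F : I -> nat) :
  (forall i, E i <= F i) -> \sum_(i : I) F i <= \sum_(i : I) E i ->
  forall i, E i = F i.
Proof.
move=> le hs i.
have := @leqif_sum I predT (fun i => E i == F i) E F (fun i _ => leqif_eq (le i)).
case=> hle /esym.
have -> : (\sum_(i | predT i) E i == \sum_(i | predT i) F i) by rewrite eqn_leq hle.
by move/forallP/(_ i)/eqP.
Qed.

Lemma fconn_closed (f : 'I_m -> 'I_m) (P : pred 'I_m) x y :
  (forall z, P z -> P (f z)) -> fconnect f x y -> P x -> P y.
Proof.
move=> clP /connectP[q hq ->] {y}.
elim: q x hq => //= z q IH x /andP[/eqP <- hq] Px.
exact: (IH _ hq (clP _ Px)).
Qed.

Lemma Gmain E : 3 <= m -> 0 < #|B| -> 2 * E <= \sum_(v in B) dG v ->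
  E * (2 * m + 1) = 5 * m * #|B| ->
  exists av : 'I_p -> bool, forall c, #|[set t | av (cl c t)]| = 1.
Proof.
move=> m3 Bpos hE hden.
case aB: (vA p m \in B); last first.
  have h := keyNA (negbT aB); exfalso.
  have h2 := leq_trans hE h.
  have := leq_mul h2 (leqnn (2 * m + 1)).
  nia.
have k := keyA aB.
have sF := sumF; have sU := sumU.
have cb : \sum_(c < m) #|[set t | FD c t]| <= 2 * m + \sum_(c < m) #|[set t | vU p c t \in B]|.
  have cb0 : \sum_(c < m) #|[set t | FD c t]| <=
             \sum_(c < m) (2 + #|[set t | vU p c t \in B]|).
    by apply: leq_sum => c _; exact: clause_bound.
  by apply: leq_trans cb0 _; rewrite big_split /= sum_nat_const card_ord mulnC.
have xb : \sum_(v in B :\ vA p m) fullv v <= #|B :\ vA p m|.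
  rewrite -card_sum_bool; apply: subset_leq_card; apply/subsetP=> v.
  by rewrite inE => /andP[].
have cB : #|B| = (#|B :\ vA p m|).+1 by rewrite (cardsD1 (vA p m) B) aB.
rewrite sF in k xb; rewrite sU in k.
move: k xb cb hden hE; rewrite cB.
set S := \sum_(v in B) dG v.
set x := \sum_(c < m) #|[set t | FD c t]|.
set y := \sum_(c < m) #|[set t | vU p c t \in B]|.
set b := #|B :\ vA p m|.
move=> k xb cb hden hE.
have [bE [xE yE]] : b = 2 * m /\ x = 2 * m /\ y = 0.
  have h1 : 2 * E + y <= 4 * b + x by lia.
  have h2 := leq_mul h1 (leqnn (2 * m + 1)).
  case: (ltnP b (2 * m)) => hb.
    exfalso; nia.
  have h3 : b <= 2 * m by nia.
  nia.
have U0 : forall c, #|[set t | vU p c t \in B]| = 0.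
  move=> c; apply/esym; apply: (@sum_eq_le _ (fun _ => 0) (fun c => #|[set t | vU p c t \in B]|)) => //.
  by rewrite big1_eq -/y yE.
have F2 : forall c, #|[set t | FD c t]| = 2.
  apply: (@sum_eq_le _ (fun c => #|[set t | FD c t]|) (fun _ => 2)).
    by move=> c; have := clause_bound c; rewrite U0 addn0.
  by rewrite sum_nat_const card_ord -/x xE mulnC.
have Bfull : forall v, v \in B -> v != vA p m -> fullv v.
  have ceq : #|[set v in B :\ vA p m | fullv v]| = #|B :\ vA p m|.
    by rewrite card_sum_bool sF -/x -/b xE bE.
  have sub : [set v in B :\ vA p m | fullv v] \subset B :\ vA p m.
    by apply/subsetP=> v; rewrite inE => /andP[].
  move=> v vB va; have := subset_cardP ceq sub v.
  by rewrite !inE va vB /= => ->.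
have clos : forall j c, vD j c \in B -> vD j (next (cyc j) c) \in B.
  move=> j c vB; have hf : 4 <= dG (vD j c) by exact: (Bfull _ vB).
  have e1 : ES (vD j c) (vS j c ord0) by apply: (Dfull hf); rewrite !inE eqxx.
  have S0B : vS j c ord0 \notin B by apply/negP=> h; have := Bfull _ h (erefl true).
  have S0T : vS j c ord0 \in T by exact: W_r e1 S0B.
  have [_ e2] := T_both S0T (fun w h => nbS0 (ES_GE h)).
  have S1B : vS j c ord_max \notin B by apply/negP=> h; have := Bfull _ h (erefl true).
  have S1T : vS j c ord_max \in T by exact: W_r e2 S1B.
  have [_ e3] := T_both S1T (fun w h => nbS1 (ES_GE h)).
  apply/negPn/negP=> DB.
  have DT := W_r e3 DB.
  by have := T_path S0T S1T DT e2 e3.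
have aon : forall j c c', c \in cyc j -> vD j c \in B -> vD j c' \in B \/ c' \notin cyc j.
  move=> j c c' hc vB; case hc' : (c' \in cyc j); last by right.
  left; apply: (@fconn_closed (next (cyc j)) (fun z => vD j z \in B) c c').
  - by move=> z; apply: clos.
  - by rewrite (fconnect_cycle (cycle_next (cyc_uniq j)) hc) hc'.
  - exact: vB.
exists (fun j => [forall c, (c \in cyc j) ==> (vD j c \notin B)]) => c.
have key : forall t, [forall c0, (c0 \in cyc (cl c t)) ==> (vD (cl c t) c0 \notin B)] = ~~ FD c t.
  move=> t; have hc : c \in cyc (cl c t) by rewrite cyc_mem; apply/existsP; exists t.
  rewrite /FD; case vB: (vD (cl c t) c \in B) => /=.
    have -> : 4 <= dG (vD (cl c t) c) by exact: (Bfull _ vB).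
    by apply/negbTE/negP => /forallP/(_ c); rewrite hc vB.
  apply/forallP=> c'; apply/implyP=> hc'; apply/negP=> vB'.
  case: (aon _ _ c hc' vB') => [|]; [by rewrite vB | by rewrite hc].
have -> : [set t | [forall c0, (c0 \in cyc (cl c t)) ==> (vD (cl c t) c0 \notin B)]] = ~: [set t | FD c t].
  by apply/setP=> t; rewrite !inE key.
have := cardsC [set t | FD c t]; rewrite F2 card_ord; lia.
Qed.
End GS.

Import GRing.Theory Num.Theory.

Theorem lemma5 (p m : nat) (cl : 'I_m -> 'I_3 -> 'I_p)
  (cyc : 'I_p -> seq 'I_m)
  (cl_distinct : forall c : 'I_m, injective (cl c))
  (occ3 : forall j : 'I_p, (3 <= #|[set c | clause_has cl j c]|)%N)
  (cyc_uniq : forall j : 'I_p, uniq (cyc j))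
  (cyc_mem : forall (j : 'I_p) (c : 'I_m), (c \in cyc j) = clause_has cl j c) :
  has_1stm_of_density (G_V cl) (G_E cl cyc)
    (((5 * m)%:R / (2 * m + 1)%:R)%R : rat) ->
  exists a : 'I_p -> bool,
    forall c : 'I_m, #|[set t : 'I_3 | a (cl c t)]| = 1%N.
Proof.
case: (posnP m) => [m0|mpos].
  by move=> _; exists (fun _ => true) => c; exfalso; have := ltn_ord c; lia.
have m3 : 3 <= m.
  have c0 : 'I_m := Ordinal mpos.
  apply: leq_trans (occ3 (cl c0 ord0)) _.
  by apply: leq_trans (max_card _) _; rewrite card_ord.
case=> n [eH [[eHs eHi] hden [k [f [finj fV fE]]]]].
pose B : {set G_carrier p m} := [set f (inl x) | x : 'I_n].
pose T : {set G_carrier p m} := [set f s | s in [set s | sub_V eH k s && isinr s]].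
pose ESG : rel (G_carrier p m) := fun v w =>
  [exists s, exists s', [&& sub_V eH k s, sub_V eH k s', sub_E eH k s s',
                           f s == v & f s' == w]].
have ESGf : forall s w, sub_V eH k s ->
    ESG (f s) w = (w \in f @: [set s' | sub_V eH k s' && sub_E eH k s s']).
  move=> s w vs; apply/idP/imsetP.
  - case/existsP=> s1 /existsP[s2 /and5P[v1 v2 e /eqP e1 /eqP e2]].
    have es : s1 = s by exact: finj e1.
    by subst; exists s2; rewrite // inE v2.
  - case=> s2; rewrite inE => /andP[v2 e] ->.
    by apply/existsP; exists s; apply/existsP; exists s2; rewrite vs v2 e !eqxx.
have dGf : forall s, sub_V eH k s ->
    #|[set w | ESG (f s) w]| = #|[set w | sub_V eH k w && sub_E eH k s w]|.
  move=> s vs.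
  have inj : {in [set w | sub_V eH k w && sub_E eH k s w] &, injective f}.
    by move=> a b; rewrite !inE => /andP[va _] /andP[vb _]; exact: finj.
  by rewrite -(card_in_imset inj); apply: eq_card => w; rewrite inE ESGf.
have ESGE : forall v w, ESG v w -> exists s s', [/\ sub_V eH k s, sub_V eH k s',
    sub_E eH k s s', v = f s & w = f s'].
  move=> v0 w0 /existsP[s1 /existsP[s2 /and5P[v1 v2 e /eqP e1 /eqP e2]]].
  by exists s1, s2.
have fi : injective (fun x : 'I_n => f (inl x)).
  by move=> x y /finj => /(_ isT isT) [].
have cB : #|B| = n by rewrite card_imset // card_ord.
have inT : forall v, v \in T -> exists2 s, (sub_V eH k s && isinr s) & v = f s.
  by move=> v /imsetP[s0]; rewrite inE => h ->; exists s0.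
have [hnum npos] : nedges eH * (2 * m + 1) = 5 * m * n /\ 0 < n.
  move: hden; rewrite /density.
  case: (posnP n) => [n0|np].
    have -> : (n%:R : rat) = 0%R by rewrite n0.
    rewrite invr0 mulr0 => /esym/eqP.
    rewrite mulf_eq0 invr_eq0 !pnatr_eq0; lia.
  move/eqP; rewrite eqr_div ?pnatr_eq0 -?lt0n // ?addn1 // -!natrM eqr_nat => /eqP e.
  by split.
apply: (@Gmain p m cl cyc cl_distinct cyc_uniq cyc_mem B T ESG _ _ _ _ _ (nedges eH) m3).
- move=> v w /ESGE [s [s' [v1 v2 e ev ew]]]; subst v w.
  by apply/existsP; exists s'; apply/existsP; exists s; rewrite v1 v2 sES_sym // !eqxx.
- by move=> v w /ESGE [s [s' [v1 v2 e ev ew]]]; subst v w; apply: fE.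
- move=> v w /ESGE [s [s' [v1 v2 e ev ew]]]; subst v w.
  case: s v1 e => [x|s] v1 e.
    by apply/orP; left; apply/imsetP; exists x.
  by apply/orP; right; apply/imsetP; exists (inr s) => //; rewrite inE v1.
- move=> v /inT [s /andP[vs is1] ->].
  by rewrite dGf // deg_inr.
- move=> u v w /inT [s1 /andP[v1 i1] ->] /inT [s2 /andP[v2 i2] ->] /inT [s3 /andP[v3 i3] ->].
  move=> e12 e23; congr f.
  have h12 : sub_E eH k s1 s2.
    by move: e12; rewrite ESGf // => /imsetP[s' ]; rewrite inE => /andP[vs' e] /finj -> //.
  have h23 : sub_E eH k s2 s3.
    by move: e23; rewrite ESGf // => /imsetP[s' ]; rewrite inE => /andP[vs' e] /finj -> //.
  exact: path_inr h12 h23.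
- by rewrite cB.
- have -> : \sum_(v in B) dG ESG v = \sum_(x : 'I_n) dG ESG (f (inl x)).
    by rewrite big_imset //; move=> x y _ _; apply: fi.
  rewrite -(sumdeg eHs eHi); apply: leq_sum => x _.
  by rewrite /dG dGf //; apply: degH.
- by rewrite cB.
Qed.
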